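(* Let $\mathbf{L}=L_0+L_1\mathfrak{q}$, where $L_0\in\mathbb{R}^{n\times n}$ is lower triangular and $L_1\in\mathbb{R}^{n\times n}$ is lower triangular with zeros on the diagonal. Let $K_2\in\mathbb{R}^{n\times p}$ and $x_0\in\mathbb{R}^p$. If $L_0$ is invertible, then for any $r\in(0,1)$ the solution $z\in\ell_{2+}^n$ to $$\mathbf{L}\mathbf{L}^*z=(r^0K_2x_0,\ r^1K_2x_0,\ r^2K_2x_0,\ \ldots)$$ satisfies $$K_1z[0]=r^0K_2x_0,\qquad\text{where } K_1=(L_0+L_1r)L_0^\top.$$
   Context: $\ell_{2+}^n$ is the Hilbert space of square-summable sequences $(v[0],v[1],\ldots)$ with $v[k]\in\mathbb{R}^n$ and inner product $\langle x,y\rangle=\sum_k x[k]^\top y[k]$. The forward shift $\mathfrak{q}$ acts by $(\mathfrak{q}v)[k]=v[k+1]$, so $(\mathbf{L}v)[k]=L_0v[k]+L_1v[k+1]$; its adjoint $\mathfrak{q}^*$ acts by $(\mathfrak{q}^*v)[0]=0$, $(\mathfrak{q}^*v)[k]=v[k-1]$ for $k\ge1$, so $\mathbf{L}^*=L_0^\top+L_1^\top\mathfrak{q}^*$. *)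

(* Defs.v *)
From HB Require Import structures.
From mathcomp Require Import all_boot all_order all_algebra.
From mathcomp Require Export reals.
Set Implicit Arguments. Unset Strict Implicit. Unset Printing Implicit Defensive.
Import Order.TTheory GRing.Theory Num.Theory.
Local Open Scope ring_scope.

Definition vseq (R : realType) (n : nat) := nat -> 'cV[R]_n.

(* Membership in l_{2+}^n: sum_k ||v[k]||^2 < oo (nonnegative terms, so
   equivalently the partial sums are bounded). *)
Definition in_l2p (R : realType) (n : nat) (v : vseq R n) : Prop :=
  exists M : R, forall N : nat,
    \sum_(k < N) \sum_(i < n) (v k i 0) ^+ 2 <= M.

Definition fshift (R : realType) (n : nat) (v : vseq R n) : vseq R n :=
  fun k => v k.+1.
Definition fshift_adj (R : realType) (n : nat) (v : vseq R n) : vseq R n :=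
  fun k => if k is k'.+1 then v k' else 0.

Definition Lop (R : realType) (n : nat) (L0 L1 : 'M[R]_n) (v : vseq R n)
  : vseq R n := fun k => L0 *m v k + L1 *m fshift v k.
Definition Lop_adj (R : realType) (n : nat) (L0 L1 : 'M[R]_n) (v : vseq R n)
  : vseq R n := fun k => L0^T *m v k + L1^T *m fshift_adj v k.

Definition lower_tri (R : realType) (n : nat) (A : 'M[R]_n) : Prop :=
  forall i j : 'I_n, (i < j)%N -> A i j = 0.
Definition strict_lower_tri (R : realType) (n : nat) (A : 'M[R]_n) : Prop :=
  forall i j : 'I_n, (i <= j)%N -> A i j = 0.

(* Main.v *)
Require Import Defs.
From HB Require Import structures.
From mathcomp Require Import all_boot all_order all_algebra.
From mathcomp Require Import reals.
Import Order.TTheory GRing.Theory Num.Theory.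
Local Open Scope ring_scope.

Lemma diag_nz (R : realType) (n : nat) (L0 : 'M[R]_n) :
  lower_tri L0 -> L0 \in unitmx -> forall j, L0 j j != 0.
Proof.
move=> lt u j; apply/negP => /eqP H.
move: u; rewrite unitmxE det_trig; last by apply/is_trig_mxP.
by rewrite (bigD1 j) //= H mul0r unitr0.
Qed.

Lemma kill (R : realType) (n : nat) (L0 L1 : 'M[R]_n) (d : nat -> 'cV[R]_n) :
  lower_tri L0 -> strict_lower_tri L1 -> (forall j, L0 j j != 0) ->
  (forall k, L0 *m d k + L1 *m d k.+1 = 0) -> forall k, d k = 0.
Proof.
move=> lt slt nz H.
suff S : forall j k (i : 'I_n), (i < j)%N -> d k i 0 = 0.
  move=> k; apply/matrixP => i c; rewrite (ord1 c) mxE; exact: (S n).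
elim=> [//|j IH] k i; rewrite ltnS leq_eqVlt => /orP [/eqP Ei|]; last exact: IH.
have := congr1 (fun M : 'cV[R]_n => M i 0) (H k); rewrite !mxE.
rewrite (bigD1 i) //= big1; last first.
  move=> l /negbTE nl; case: (ltngtP l i) => c.
  - by rewrite IH ?mulr0 // -Ei.
  - by rewrite lt ?mul0r.
  - by move: nl; rewrite (val_inj c) eqxx.
rewrite big1; last first.
  move=> l _; case: (ltnP l i) => c.
  - by rewrite IH ?mulr0 // -Ei.
  - by rewrite slt ?mul0r.
rewrite addr0 addr0 => /eqP; rewrite mulf_eq0 (negbTE (nz i)) /= => /eqP //.
Qed.

Theorem lemma3 (R : realType) (n p : nat) (L0 L1 : 'M[R]_n)
  (K2 : 'M[R]_(n, p)) (x0 : 'cV[R]_p) :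
  lower_tri L0 -> strict_lower_tri L1 -> L0 \in unitmx ->
  forall r : R, 0 < r < 1 ->
  forall z : vseq R n, in_l2p z ->
  (forall k : nat, Lop L0 L1 (Lop_adj L0 L1 z) k = r ^+ k *: (K2 *m x0)) ->
  (L0 + r *: L1) *m L0^T *m z 0%N = r ^+ 0 *: (K2 *m x0).
Proof.
move=> lt slt u r _ z _ H.
set w := Lop_adj L0 L1 z.
have Hw : forall k, L0 *m w k + L1 *m w k.+1 = r ^+ k *: (K2 *m x0) by exact: H.
have D := @kill R n L0 L1 (fun k => w k.+1 - r *: w k) lt slt (@diag_nz R n L0 lt u).
have w1 : w 1%N = r *: w 0%N.
  apply/eqP; rewrite -subr_eq0; apply/eqP; apply: (D _ 0%N) => k.
  rewrite /= !mulmxBr -!scalemxAr addrACA -opprD -scalerDr !Hw scalerA -exprS.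
  by rewrite subrr.
have w0 : w 0%N = L0^T *m z 0%N by rewrite /w /Lop_adj /= mulmx0 addr0.
rewrite -mulmxA -w0 mulmxDl -scalemxAl scalemxAr -w1 expr0.
by rewrite (Hw 0%N).
Qed.
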